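(* For diagonal physical $Q=\operatorname{diag}(\lambda_1,\lambda_2,\lambda_3)$ with $-\tfrac13<\lambda_1\le\lambda_2\le\lambda_3<\tfrac23$, $\lambda_1+\lambda_2+\lambda_3=0$, the Lagrange multiplier $\mu_1$ of its optimal density satisfies $\mu_1\to-\infty$ as $\lambda_1\to-\tfrac13$; that is, for every $M>0$ there is $\eta>0$ such that $\lambda_1+\tfrac13<\eta$ implies $\mu_1<-M$.
   Context: Points of the unit sphere $\mathbb S^2$ are written $(x,y,z)$, and $\mathrm dS$ is surface measure. For a physical $Q$ (symmetric traceless with all eigenvalues in $(-\tfrac13,\tfrac23)$) the Ball–Majumdar potential is $f(Q)=\inf\int_{\mathbb S^2}\rho\ln\rho\,\mathrm dS$ over even probability densities $\rho$ with $\int(\mathbf n\otimes\mathbf n-\tfrac13I_3)\rho\,\mathrm dS=Q$. For diagonal physical $Q=\operatorname{diag}(\lambda_1,\lambda_2,\lambda_3)$ this infimum is attained by $\rho_Q(x,y,z)=\exp(\mu_1x^2+\mu_2y^2+\mu_3z^2)/Z$, $Z=\int_{\mathbb S^2}\exp(\mu_1x^2+\mu_2y^2+\mu_3z^2)\,\mathrm dS$, where the Lagrange multipliers $\mu_1,\mu_2,\mu_3\in\mathbb R$ satisfy $\mu_1+\mu_2+\mu_3=0$ and $\int x^2\rho_Q\,\mathrm dS=\lambda_1+\tfrac13$, $\int y^2\rho_Q\,\mathrm dS=\lambda_2+\tfrac13$, $\int z^2\rho_Q\,\mathrm dS=\lambda_3+\tfrac13$. *)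

(* Defs.v *)
From Stdlib Require Import Reals.
From Coquelicot Require Import Coquelicot.
Open Scope R_scope.

(* Integral over the unit sphere S^2 with respect to surface measure dS,
   written in spherical coordinates:
     (x,y,z) = (sin th cos ph, sin th sin ph, cos th),  dS = sin th dth dph,
     th in [0,pi], ph in [0,2pi].
   All integrands used below are continuous, so the Riemann integral is the
   surface integral. *)
Definition sphere_int (f : R -> R -> R -> R) : R :=
  RInt (fun ph =>
    RInt (fun th => f (sin th * cos ph) (sin th * sin ph) (cos th) * sin th)
         0 PI) 0 (2 * PI).

Definition BM_Z (m1 m2 m3 : R) : R :=
  sphere_int (fun x y z => exp (m1 * x ^ 2 + m2 * y ^ 2 + m3 * z ^ 2)).

Definition BM_rho (m1 m2 m3 : R) (x y z : R) : R :=
  exp (m1 * x ^ 2 + m2 * y ^ 2 + m3 * z ^ 2) / BM_Z m1 m2 m3.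

Definition is_BM_multiplier (l1 l2 l3 m1 m2 m3 : R) : Prop :=
  m1 + m2 + m3 = 0 /\
  sphere_int (fun x y z => x ^ 2 * BM_rho m1 m2 m3 x y z) = l1 + 1/3 /\
  sphere_int (fun x y z => y ^ 2 * BM_rho m1 m2 m3 x y z) = l2 + 1/3 /\
  sphere_int (fun x y z => z ^ 2 * BM_rho m1 m2 m3 x y z) = l3 + 1/3.

(* Main.v *)
Require Import Defs.
From Stdlib Require Import Reals Lra.
From Coquelicot Require Import Coquelicot.
Open Scope R_scope.

Lemma ball_R (x y : R) (e : posreal) : Rabs (y - x) < e -> ball x e y.
Proof. intros H. exact H. Qed.

Lemma c2d_fst (K : R -> R -> R) p t :
  continuity_2d_pt K p t -> continuous (K p) t.
Proof.
  intros H. apply filterlim_locally. intros eps.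
  destruct (H eps) as [d Hd].
  exists d. intros y Hy. apply ball_R. apply Hd.
  - rewrite Rminus_eq_0, Rabs_R0. apply cond_pos.
  - exact Hy.
Qed.

Lemma c2d_snd (K : R -> R -> R) p t :
  continuity_2d_pt K p t -> continuous (fun q => K q t) p.
Proof.
  intros H. apply filterlim_locally. intros eps.
  destruct (H eps) as [d Hd].
  exists d. intros y Hy. apply ball_R. apply Hd.
  - exact Hy.
  - rewrite Rminus_eq_0, Rabs_R0. apply cond_pos.
Qed.

Lemma c2d_exRInt (K : R -> R -> R) p a b :
  (forall t, continuity_2d_pt K p t) -> ex_RInt (K p) a b.
Proof.
  intros H. apply (@ex_RInt_continuous R_CompleteNormedModule). intros z _. apply c2d_fst, H.
Qed.

Lemma param_cont (K : R -> R -> R) a b c :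
  a <= b -> (forall p t, continuity_2d_pt K p t) ->
  continuous (fun p => RInt (K p) a b) c.
Proof.
  intros Hab H. apply filterlim_locally. intros eps.
  assert (He : 0 < eps / (b - a + 1)) by (apply Rdiv_lt_0_compat; [apply cond_pos|lra]).
  destruct (uniform_continuity_2d_1d' K a b c (fun x _ => H c x) (mkposreal _ He)) as [d Hd].
  exists d. intros v Hv. apply ball_R.
  change (Rabs (v - c) < d) in Hv.
  replace (RInt (K v) a b - RInt (K c) a b) with (RInt (fun t => minus (K v t) (K c t)) a b)
    by (rewrite (@RInt_minus R_CompleteNormedModule) by (apply c2d_exRInt; auto); reflexivity).
  eapply Rle_lt_trans.
  apply (abs_RInt_le_const (fun t => K v t - K c t) a b (eps / (b - a + 1))); [lra| |].
  - apply (@ex_RInt_minus R_CompleteNormedModule); apply c2d_exRInt; auto.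
  - intros t Ht. apply Rlt_le.
    apply (Hd t c t v).
    + exact Ht.
    + split; apply Rabs_le_between'; rewrite Rminus_eq_0, Rabs_R0; apply Rlt_le, cond_pos.
    + exact Ht.
    + apply Rabs_le_between'. apply Rlt_le, Hv.
    + rewrite Rminus_eq_0, Rabs_R0. apply cond_pos.
  - pose proof (cond_pos eps).
    replace ((b - a) * (eps / (b - a + 1))) with (eps - eps / (b - a + 1)) by (field; lra).
    lra.
Qed.

Lemma pos_at_point (g : R -> R) a b c :
  a < c < b -> (forall x, a <= x <= b -> continuous g x) ->
  (forall x, a <= x <= b -> 0 <= g x) -> 0 < g c -> 0 < RInt g a b.
Proof.
  intros [Hac Hcb] Hc Hp Hgc.
  assert (Hcc : continuous g c) by (apply Hc; lra).
  assert (He : 0 < g c / 2) by lra.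
  destruct (proj1 (filterlim_locally g (g c)) Hcc (mkposreal _ He)) as [d Hd].
  set (d' := Rmin (d / 2) (Rmin ((c - a) / 2) ((b - c) / 2))).
  assert (Hd1 : d' <= d / 2) by apply Rmin_l.
  assert (Hd2 : d' <= (c - a) / 2) by (eapply Rle_trans; [apply Rmin_r|apply Rmin_l]).
  assert (Hd3 : d' <= (b - c) / 2) by (eapply Rle_trans; [apply Rmin_r|apply Rmin_r]).
  assert (Hd0 : 0 < d').
  { unfold d'. pose proof (cond_pos d). repeat apply Rmin_pos; lra. }
  assert (Hex : forall u v, a <= u -> u <= v -> v <= b -> ex_RInt g u v).
  { intros u v H1 H2 H3. apply (@ex_RInt_continuous R_CompleteNormedModule).
    intros z Hz. rewrite Rmin_left, Rmax_right in Hz by lra. apply Hc; lra. }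
  rewrite <- (@RInt_Chasles R_CompleteNormedModule g a (c - d') b) by (apply Hex; lra).
  rewrite <- (@RInt_Chasles R_CompleteNormedModule g (c - d') (c + d') b) by (apply Hex; lra).
  unfold plus; simpl.
  assert (0 <= RInt g a (c - d')) by (apply RInt_ge_0; [lra|apply Hex; lra|intros; apply Hp; lra]).
  assert (0 <= RInt g (c + d') b) by (apply RInt_ge_0; [lra|apply Hex; lra|intros; apply Hp; lra]).
  assert (0 < RInt g (c - d') (c + d')).
  { apply RInt_gt_0; [lra| |intros; apply Hc; lra].
    intros x Hx. assert (Hb : ball c d x).
    { apply ball_R. apply Rabs_def1; lra. }
    specialize (Hd x Hb). change (Rabs (g x - g c) < g c / 2) in Hd.
    apply Rabs_def2 in Hd. lra. }
  lra.
Qed.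

Definition SK (g : R -> R -> R -> R) (p t : R) : R :=
  g (sin t * cos p) (sin t * sin p) (cos t) * sin t.

Definition cont3 (g : R -> R -> R -> R) : Prop :=
  forall p t, continuity_2d_pt (fun p t => g (sin t * cos p) (sin t * sin p) (cos t)) p t.

Lemma sphere_int_SK g : sphere_int g = RInt (fun p => RInt (SK g p) 0 PI) 0 (2 * PI).
Proof. reflexivity. Qed.

Lemma cont_sin_2 p t : continuity_2d_pt (fun _ t => sin t) p t.
Proof. apply (continuity_1d_2d_pt_comp sin (fun _ t => t)). apply continuity_sin. apply continuity_2d_pt_id2. Qed.
Lemma cont_cos_2 p t : continuity_2d_pt (fun _ t => cos t) p t.
Proof. apply (continuity_1d_2d_pt_comp cos (fun _ t => t)). apply continuity_cos. apply continuity_2d_pt_id2. Qed.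
Lemma cont_sin_1 p t : continuity_2d_pt (fun p _ => sin p) p t.
Proof. apply (continuity_1d_2d_pt_comp sin (fun p _ => p)). apply continuity_sin. apply continuity_2d_pt_id1. Qed.
Lemma cont_cos_1 p t : continuity_2d_pt (fun p _ => cos p) p t.
Proof. apply (continuity_1d_2d_pt_comp cos (fun p _ => p)). apply continuity_cos. apply continuity_2d_pt_id1. Qed.

Lemma cont3_SK g : cont3 g -> forall p t, continuity_2d_pt (SK g) p t.
Proof. intros H p t. apply continuity_2d_pt_mult. apply H. apply cont_sin_2. Qed.

Lemma cont3_x : cont3 (fun x y z => x).
Proof. intros p t. apply continuity_2d_pt_mult. apply cont_sin_2. apply cont_cos_1. Qed.
Lemma cont3_y : cont3 (fun x y z => y).
Proof. intros p t. apply continuity_2d_pt_mult. apply cont_sin_2. apply cont_sin_1. Qed.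
Lemma cont3_z : cont3 (fun x y z => z).
Proof. intros p t. apply cont_cos_2. Qed.
Lemma cont3_const c : cont3 (fun x y z => c).
Proof. intros p t. apply continuity_2d_pt_const. Qed.
Lemma cont3_plus g1 g2 : cont3 g1 -> cont3 g2 -> cont3 (fun x y z => g1 x y z + g2 x y z).
Proof. intros H1 H2 p t. apply continuity_2d_pt_plus; auto. Qed.
Lemma cont3_minus g1 g2 : cont3 g1 -> cont3 g2 -> cont3 (fun x y z => g1 x y z - g2 x y z).
Proof. intros H1 H2 p t. apply continuity_2d_pt_minus; auto. Qed.
Lemma cont3_mult g1 g2 : cont3 g1 -> cont3 g2 -> cont3 (fun x y z => g1 x y z * g2 x y z).
Proof. intros H1 H2 p t. apply continuity_2d_pt_mult; auto. Qed.
Lemma cont3_comp (h : R -> R) g : (forall r, continuity_pt h r) -> cont3 g -> cont3 (fun x y z => h (g x y z)).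
Proof. intros H1 H2 p t. apply (continuity_1d_2d_pt_comp h); auto. Qed.
Lemma cont3_pow2 g : cont3 g -> cont3 (fun x y z => g x y z ^ 2).
Proof. intros H. apply (cont3_comp (fun r => r ^ 2)); auto.
  intros r. apply derivable_continuous_pt. apply derivable_pt_pow. Qed.
Lemma cont3_exp g : cont3 g -> cont3 (fun x y z => exp (g x y z)).
Proof. intros H. apply (cont3_comp exp); auto. intros r; apply derivable_continuous_pt, derivable_pt_exp. Qed.

Lemma G_cont g c : cont3 g -> continuous (fun p => RInt (SK g p) 0 PI) c.
Proof. intros H. apply param_cont. pose proof PI_RGT_0; lra. apply cont3_SK, H. Qed.

Lemma G_ex g a b : cont3 g -> ex_RInt (fun p => RInt (SK g p) 0 PI) a b.
Proof. intros H. apply (@ex_RInt_continuous R_CompleteNormedModule). intros; apply G_cont, H. Qed.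

Lemma sphere_ext g1 g2 : (forall p t, SK g1 p t = SK g2 p t) -> sphere_int g1 = sphere_int g2.
Proof. intros H. rewrite !sphere_int_SK. apply RInt_ext. intros. apply RInt_ext. intros; apply H. Qed.

Lemma sphere_plus g1 g2 : cont3 g1 -> cont3 g2 ->
  sphere_int (fun x y z => g1 x y z + g2 x y z) = sphere_int g1 + sphere_int g2.
Proof.
  intros H1 H2. rewrite !sphere_int_SK.
  rewrite <- (@RInt_plus R_CompleteNormedModule) by (apply G_ex; auto).
  apply RInt_ext. intros x _.
  rewrite <- (@RInt_plus R_CompleteNormedModule) by (apply c2d_exRInt, cont3_SK; auto).
  apply RInt_ext. intros t _. unfold SK, plus; simpl. ring.
Qed.

Lemma sphere_scal k g : cont3 g ->
  sphere_int (fun x y z => k * g x y z) = k * sphere_int g.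
Proof.
  intros H1. rewrite !sphere_int_SK.
  rewrite <- (@RInt_scal R_CompleteNormedModule) by (apply G_ex; auto).
  apply RInt_ext. intros x _.
  rewrite <- (@RInt_scal R_CompleteNormedModule) by (apply c2d_exRInt, cont3_SK; auto).
  apply RInt_ext. intros t _. unfold SK, scal; simpl. unfold mult; simpl. ring.
Qed.

Lemma sphere_le g1 g2 : cont3 g1 -> cont3 g2 ->
  (forall p t, 0 <= t <= PI -> SK g1 p t <= SK g2 p t) -> sphere_int g1 <= sphere_int g2.
Proof.
  intros H1 H2 H. pose proof PI_RGT_0. rewrite !sphere_int_SK.
  apply RInt_le; [lra|apply G_ex; auto|apply G_ex; auto|].
  intros p _. apply RInt_le; [lra|apply c2d_exRInt, cont3_SK; auto|apply c2d_exRInt, cont3_SK; auto|].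
  intros t Ht. apply H; lra.
Qed.

Lemma sphere_pos g : cont3 g ->
  (forall p t, 0 <= t <= PI -> 0 <= SK g p t) -> 0 < SK g (PI/4) (PI/4) -> 0 < sphere_int g.
Proof.
  intros H1 H2 H3. pose proof PI_RGT_0. rewrite !sphere_int_SK.
  apply (pos_at_point _ _ _ (PI/4)); [lra| intros; apply G_cont; auto | | ].
  - intros p _. apply RInt_ge_0; [lra|apply c2d_exRInt, cont3_SK; auto|].
    intros t Ht; apply H2; lra.
  - apply (pos_at_point _ _ _ (PI/4)); [lra| | |auto].
    + intros; apply c2d_fst, cont3_SK; auto.
    + intros; apply H2; lra.
Qed.

Definition E (m1 m2 m3 : R) (x y z : R) := exp (m1 * x ^ 2 + m2 * y ^ 2 + m3 * z ^ 2).

Lemma cont3_E m1 m2 m3 : cont3 (E m1 m2 m3).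
Proof.
  unfold E. apply cont3_exp. repeat apply cont3_plus; apply cont3_mult;
  try apply cont3_const; apply cont3_pow2; auto using cont3_x, cont3_y, cont3_z.
Qed.

Definition gth m1 m2 m3 x y z :=
  (3 * z ^ 2 - 1 + 2 * z ^ 2 * ((m1 - m3) * x ^ 2 + (m2 - m3) * y ^ 2)) * E m1 m2 m3 x y z.

Lemma th_deriv m1 m2 m3 p t :
  is_derive (fun t => cos t * sin t ^ 2 * E m1 m2 m3 (sin t * cos p) (sin t * sin p) (cos t)) t
    (SK (gth m1 m2 m3) p t).
Proof.
  unfold SK, gth, E. auto_derive. auto. simpl.
  set (e := exp _).
  pose proof (sin2_cos2 t) as HS. pose proof (sin2_cos2 p) as HP.
  apply Rminus_diag_uniq.
  transitivity (e * (-(sin t)*(sin t ^ 2 + cos t ^ 2 - 1) + 2*m3*cos t ^ 2*sin t ^ 3*(sin p ^ 2 + cos p ^ 2 - 1))).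
  unfold Rsqr in *. ring. unfold Rsqr in *. simpl. rewrite ?Rmult_1_r. rewrite HS, HP. ring.
Qed.

Lemma cont3_gth m1 m2 m3 : cont3 (gth m1 m2 m3).
Proof.
  unfold gth. apply cont3_mult; [|apply cont3_E].
  repeat first [apply cont3_minus | apply cont3_plus | apply cont3_mult | apply cont3_pow2 | apply cont3_const
     | apply cont3_x | apply cont3_y | apply cont3_z].
Qed.

Lemma th_identity m1 m2 m3 : sphere_int (gth m1 m2 m3) = 0.
Proof.
  rewrite sphere_int_SK.
  transitivity (RInt (fun _ => 0) 0 (2 * PI)).
  2:{ rewrite RInt_const. unfold scal; simpl. unfold mult; simpl. ring. }
  apply RInt_ext. intros p _.
  apply is_RInt_unique.
  set (F := fun t => cos t * sin t ^ 2 * E m1 m2 m3 (sin t * cos p) (sin t * sin p) (cos t)).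
  assert (H := @is_RInt_derive R_CompleteNormedModule F (SK (gth m1 m2 m3) p) 0 PI
     (fun t _ => th_deriv m1 m2 m3 p t) (fun t _ => c2d_fst _ _ _ (cont3_SK _ (cont3_gth m1 m2 m3) p t))).
  unfold minus, plus, opp in H; simpl in H.
  replace (F PI + - F 0) with 0 in H. exact H.
  unfold F. rewrite sin_PI, sin_0. ring.
Qed.

Definition gxy m1 m2 m3 x y z := x * y * E m1 m2 m3 x y z.
Definition gph m1 m2 m3 x y z := (x ^ 2 - y ^ 2 + 2 * (m2 - m1) * x ^ 2 * y ^ 2) * E m1 m2 m3 x y z.

Lemma ph_deriv m1 m2 m3 u t :
  is_derive (fun u => SK (gxy m1 m2 m3) u t) u (SK (gph m1 m2 m3) u t).
Proof.
  unfold SK, gxy, gph, E. auto_derive. auto. simpl. ring.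
Qed.

Lemma cont3_gph m1 m2 m3 : cont3 (gph m1 m2 m3).
Proof.
  unfold gph. apply cont3_mult; [|apply cont3_E].
  repeat first [apply cont3_minus | apply cont3_plus | apply cont3_mult | apply cont3_pow2 | apply cont3_const
     | apply cont3_x | apply cont3_y | apply cont3_z].
Qed.

Lemma cont3_gxy m1 m2 m3 : cont3 (gxy m1 m2 m3).
Proof.
  unfold gxy. apply cont3_mult; [|apply cont3_E].
  repeat first [apply cont3_minus | apply cont3_plus | apply cont3_mult | apply cont3_pow2 | apply cont3_const
     | apply cont3_x | apply cont3_y | apply cont3_z].
Qed.

Lemma G_deriv m1 m2 m3 p :
  is_derive (fun p => RInt (SK (gxy m1 m2 m3) p) 0 PI) p (RInt (SK (gph m1 m2 m3) p) 0 PI).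
Proof.
  assert (HD : forall u t, Derive (fun z => SK (gxy m1 m2 m3) z t) u = SK (gph m1 m2 m3) u t).
  { intros; apply is_derive_unique, ph_deriv. }
  assert (H := is_derive_RInt_param (fun u t => SK (gxy m1 m2 m3) u t) 0 PI p).
  replace (RInt (SK (gph m1 m2 m3) p) 0 PI) with
     (RInt (fun t => Derive (fun u => SK (gxy m1 m2 m3) u t) p) 0 PI).
  apply H.
  - apply filter_forall. intros x0 t _. eexists. apply ph_deriv.
  - intros t _. apply continuity_2d_pt_ext with (f := SK (gph m1 m2 m3)).
    intros; symmetry; apply HD. apply cont3_SK, cont3_gph.
  - apply filter_forall. intros y. apply c2d_exRInt, cont3_SK, cont3_gxy.
  - apply RInt_ext. intros; apply HD.
Qed.

Lemma ph_identity m1 m2 m3 : sphere_int (gph m1 m2 m3) = 0.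
Proof.
  rewrite sphere_int_SK. apply is_RInt_unique.
  set (F := fun p => RInt (SK (gxy m1 m2 m3) p) 0 PI).
  assert (H := @is_RInt_derive R_CompleteNormedModule F (fun p => RInt (SK (gph m1 m2 m3) p) 0 PI) 0 (2 * PI)
     (fun p _ => G_deriv m1 m2 m3 p) (fun p _ => G_cont _ p (cont3_gph m1 m2 m3))).
  unfold minus, plus, opp in H; simpl in H.
  replace (F (2 * PI) + - F 0) with 0 in H. exact H.
  unfold F. unfold SK. rewrite cos_2PI, sin_2PI, cos_0, sin_0. ring.
Qed.

Ltac c3 := repeat first [apply cont3_E | apply cont3_minus | apply cont3_plus | apply cont3_mult | apply cont3_pow2 | apply cont3_const
     | apply cont3_x | apply cont3_y | apply cont3_z].

Lemma sph_one p t : (sin t * cos p) ^ 2 + (sin t * sin p) ^ 2 + cos t ^ 2 = 1.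
Proof.
  pose proof (sin2_cos2 t) as HS. pose proof (sin2_cos2 p) as HP. unfold Rsqr in *.
  replace ((sin t * cos p) ^ 2 + (sin t * sin p) ^ 2 + cos t ^ 2) with
    (sin t * sin t * (sin p * sin p + cos p * cos p) + cos t * cos t) by ring.
  rewrite HP. lra.
Qed.

Lemma RInt_FTC (F f : R -> R) a b v :
  (forall x, Rmin a b <= x <= Rmax a b -> is_derive F x (f x)) ->
  (forall x, Rmin a b <= x <= Rmax a b -> continuous f x) -> F b - F a = v -> RInt f a b = v.
Proof.
  intros H1 H2 H3. apply is_RInt_unique.
  assert (H := @is_RInt_derive R_CompleteNormedModule F f a b H1 H2).
  unfold minus, plus, opp in H; simpl in H. rewrite <- H3. exact H.
Qed.

Lemma I1_val : sphere_int (fun x y z => 1) = 4 * PI.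
Proof.
  rewrite sphere_int_SK. unfold SK.
  transitivity (RInt (fun _ => 2) 0 (2 * PI)).
  2:{ rewrite RInt_const. unfold scal; simpl. unfold mult; simpl. ring. }
  apply RInt_ext. intros p _.
  apply (RInt_FTC (fun t => - cos t)).
  - intros. auto_derive; auto. ring.
  - intros. apply (@ex_derive_continuous R_AbsRing R_NormedModule). auto_derive; auto.
  - rewrite cos_PI, cos_0; ring.
Qed.

Lemma Ix_val : sphere_int (fun x y z => x ^ 2) = 4 / 3 * PI.
Proof.
  rewrite sphere_int_SK. unfold SK.
  transitivity (RInt (fun p => 4 / 3 * cos p ^ 2) 0 (2 * PI)).
  2:{ apply (RInt_FTC (fun p => 4 / 3 * ((p + sin p * cos p) / 2))).
      - intros. auto_derive; auto. pose proof (sin2_cos2 x) as HS. unfold Rsqr in HS. simpl.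
        apply Rminus_diag_uniq. match goal with |- ?e = 0 => replace e with ((-(2/3)) * (sin x * sin x + cos x * cos x - 1)) by field end.
        rewrite HS; ring.
      - intros. apply (@ex_derive_continuous R_AbsRing R_NormedModule). auto_derive; auto.
      - rewrite sin_2PI, sin_0; field. }
  apply RInt_ext. intros p _.
  apply (RInt_FTC (fun t => cos p ^ 2 * (- cos t + cos t ^ 3 / 3))).
  - intros. auto_derive; auto. pose proof (sin2_cos2 x) as HS. unfold Rsqr in HS. simpl.
    apply Rminus_diag_uniq. match goal with |- ?e = 0 => replace e with ((- (cos p * cos p * sin x)) * (sin x * sin x + cos x * cos x - 1)) by field end.
    rewrite HS; ring.
  - intros. apply (@ex_derive_continuous R_AbsRing R_NormedModule). auto_derive; auto.
  - rewrite cos_PI, cos_0; simpl; field.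
Qed.

Lemma exp_le' a b : a <= b -> exp a <= exp b.
Proof. intros [H|H]; [apply Rlt_le, exp_increasing, H| subst; lra]. Qed.

Lemma sin_pi4 : 0 < sin (PI / 4).
Proof. pose proof PI_RGT_0. apply sin_gt_0; lra. Qed.
Lemma cos_pi4 : 0 < cos (PI / 4).
Proof. pose proof PI_RGT_0. apply cos_gt_0; lra. Qed.

Lemma mom m1 m2 m3 h : cont3 h ->
  sphere_int (fun x y z => h x y z * BM_rho m1 m2 m3 x y z) =
  / BM_Z m1 m2 m3 * sphere_int (fun x y z => h x y z * E m1 m2 m3 x y z).
Proof.
  intros Hh. rewrite <- sphere_scal by (apply cont3_mult; [exact Hh|apply cont3_E]).
  apply sphere_ext. intros p t. unfold SK, BM_rho, E, Rdiv. ring.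
Qed.

Theorem lemma2p2 :
  forall M : R, 0 < M ->
  exists eta : R, 0 < eta /\
    forall l1 l2 l3 m1 m2 m3 : R,
      -1/3 < l1 -> l1 <= l2 -> l2 <= l3 -> l3 < 2/3 ->
      l1 + l2 + l3 = 0 ->
      is_BM_multiplier l1 l2 l3 m1 m2 m3 ->
      l1 + 1/3 < eta ->
      m1 < - M.
Proof.
  intros M HM. exists (exp (-3 * M) / 3). split.
  { apply Rdiv_lt_0_compat; [apply exp_pos|lra]. }
  intros l1 l2 l3 m1 m2 m3 H1 H12 H23 H3 Hs [Hm [Cx [Cy Cz]]] Heta.
  destruct (Rlt_or_le m1 (-M)) as [Hlt|Hge]; [exact Hlt|exfalso].
  pose proof PI_RGT_0 as HPI.
  set (Z := BM_Z m1 m2 m3) in *.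
  assert (HZE : Z = sphere_int (E m1 m2 m3)) by reflexivity.
  assert (Zpos : 0 < Z).
  { rewrite HZE. apply sphere_pos. apply cont3_E.
    - intros p t Ht. unfold SK. apply Rmult_le_pos; [apply Rlt_le, exp_pos| apply sin_ge_0; lra].
    - unfold SK. apply Rmult_lt_0_compat; [apply exp_pos| apply sin_pi4]. }
  set (X := sphere_int (fun x y z => x ^ 2 * E m1 m2 m3 x y z)).
  set (Y := sphere_int (fun x y z => y ^ 2 * E m1 m2 m3 x y z)).
  set (W := sphere_int (fun x y z => z ^ 2 * E m1 m2 m3 x y z)).
  rewrite mom in Cx, Cy, Cz by c3. fold Z X in Cx. fold Z Y in Cy. fold Z W in Cz.
  assert (HX : X = Z * (l1 + 1/3)) by (rewrite <- Cx; field; lra).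
  assert (HY : Y = Z * (l2 + 1/3)) by (rewrite <- Cy; field; lra).
  assert (HW : W = Z * (l3 + 1/3)) by (rewrite <- Cz; field; lra).
  set (P := sphere_int (fun x y z => x ^ 2 * y ^ 2 * E m1 m2 m3 x y z)).
  assert (Hph : X + (-1 * Y + 2 * (m2 - m1) * P) = 0).
  { rewrite <- (ph_identity m1 m2 m3). unfold X, Y, P.
    rewrite <- !sphere_scal by c3. rewrite <- !sphere_plus by c3.
    apply sphere_ext. intros p t. unfold SK, gph. ring. }
  assert (H12m : m1 <= m2).
  { destruct (Rle_or_lt m1 m2) as [h|h]; [exact h|].
    assert (Ppos : 0 < P).
    { apply sphere_pos. c3.
      - intros p t Ht. unfold SK. apply Rmult_le_pos; [|apply sin_ge_0; lra].
        apply Rmult_le_pos; [|apply Rlt_le, exp_pos].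
        apply Rmult_le_pos; apply pow2_ge_0.
      - unfold SK. pose proof sin_pi4; pose proof cos_pi4.
        apply Rmult_lt_0_compat; [|auto]. apply Rmult_lt_0_compat; [|apply exp_pos].
        apply Rmult_lt_0_compat; apply pow_lt; apply Rmult_lt_0_compat; auto. }
    assert (X <= Y) by (rewrite HX, HY; apply Rmult_le_compat_l; lra).
    nra. }
  set (C := sphere_int (fun x y z => z ^ 2 * ((m1 - m3) * x ^ 2 + (m2 - m3) * y ^ 2) * E m1 m2 m3 x y z)).
  assert (Hth : 3 * W + (-1 * Z + 2 * C) = 0).
  { rewrite <- (th_identity m1 m2 m3). unfold W, C. rewrite HZE.
    rewrite <- !sphere_scal by c3. rewrite <- !sphere_plus by c3.
    apply sphere_ext. intros p t. unfold SK, gth. ring. }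
  assert (H13m : m1 <= m3).
  { destruct (Rle_or_lt m1 m3) as [h|h]; [exact h|].
    assert (Cpos : 0 < C).
    { apply sphere_pos. c3.
      - intros p t Ht. unfold SK. apply Rmult_le_pos; [|apply sin_ge_0; lra].
        apply Rmult_le_pos; [|apply Rlt_le, exp_pos].
        apply Rmult_le_pos; [apply pow2_ge_0|].
        apply Rplus_le_le_0_compat; apply Rmult_le_pos; try apply pow2_ge_0; lra.
      - unfold SK. pose proof sin_pi4; pose proof cos_pi4.
        apply Rmult_lt_0_compat; [|auto]. apply Rmult_lt_0_compat; [|apply exp_pos].
        apply Rmult_lt_0_compat; [apply pow_lt; auto|].
        apply Rplus_lt_le_0_compat.
        + apply Rmult_lt_0_compat; [lra|]. apply pow_lt; apply Rmult_lt_0_compat; auto.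
        + apply Rmult_le_pos; [lra|apply pow2_ge_0]. }
    assert (0 <= l3) by lra.
    assert (0 <= Z * l3) by (apply Rmult_le_pos; lra).
    nra. }
  assert (Hb : forall p t, - M <= m1 * (sin t * cos p) ^ 2 + m2 * (sin t * sin p) ^ 2 + m3 * cos t ^ 2 <= 2 * M).
  { intros p t. pose proof (sph_one p t).
    pose proof (pow2_ge_0 (sin t * cos p)). pose proof (pow2_ge_0 (sin t * sin p)). pose proof (pow2_ge_0 (cos t)).
    split; nra. }
  assert (HXl : exp (- M) * (4 / 3 * PI) <= X).
  { rewrite <- Ix_val. rewrite <- (sphere_scal (exp (-M)) (fun x y z => x ^ 2)) by c3.
    apply sphere_le; [c3|c3|].
    intros p t Ht. unfold SK, E. apply Rmult_le_compat_r; [apply sin_ge_0; lra|].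
    rewrite (Rmult_comm (exp (-M))). apply Rmult_le_compat_l; [apply pow2_ge_0|].
    apply exp_le'. apply Hb. }
  assert (HZu : Z <= exp (2 * M) * (4 * PI)).
  { rewrite <- I1_val. rewrite <- (sphere_scal (exp (2 * M)) (fun x y z => 1)) by c3.
    rewrite HZE. apply sphere_le; [c3|c3|].
    intros p t Ht. unfold SK, E. apply Rmult_le_compat_r; [apply sin_ge_0; lra|].
    rewrite Rmult_1_r. apply exp_le'. apply Hb. }
  assert (Hexp : exp (2 * M) * exp (-3 * M) = exp (- M)).
  { rewrite <- exp_plus. f_equal. ring. }
  assert (X < Z * (exp (-3 * M) / 3)) by (rewrite HX; apply Rmult_lt_compat_l; lra).
  assert (Z * (exp (-3 * M) / 3) <= exp (2 * M) * (4 * PI) * (exp (-3 * M) / 3)).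
  { apply Rmult_le_compat_r; [|exact HZu]. pose proof (exp_pos (-3 * M)); lra. }
  assert (exp (2 * M) * (4 * PI) * (exp (-3 * M) / 3) = exp (- M) * (4 / 3 * PI)).
  { rewrite <- Hexp. field. }
  lra.
Qed.
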